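(* Let $\gamma$ be a regularly varying function near $0$ with index $\alpha\in(0,1]$. Then there exist constants $\mathsf{c}>0$ and $x_0\in(0,1)$ such that $$\int_0^{1/2}\gamma(xy)\frac{dy}{y\sqrt{\log(1/y)}}\le \mathsf{c}\,\gamma(x)\quad\text{for all }x\in[0,x_0].$$
   Context: $\gamma$ is a continuous increasing function near $0$ with $\lim_{x\downarrow0}\gamma(x)=0$. $\gamma$ is regularly varying near $0$ with index $\alpha$ if $\gamma(x)=x^\alpha L(x)$ for all $x\in(0,x_0)$ for some $x_0>0$, where $L:(0,x_0)\to[0,\infty)$ is slowly varying at $0$ in the sense of Karamata, i.e. $L(\lambda x)/L(x)\to1$ as $x\downarrow0$ for every $\lambda>0$. *)

(* Defs.v *)
From HB Require Import structures.
From mathcomp Require Import all_boot all_order all_algebra.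
From mathcomp Require Import all_classical all_reals all_analysis.
Set Implicit Arguments. Unset Strict Implicit. Unset Printing Implicit Defensive.
Import Order.TTheory GRing.Theory Num.Theory.
Import numFieldNormedType.Exports.
Local Open Scope classical_set_scope.
Local Open Scope ring_scope.

Definition slowly_varying_at0 (R : realType) (x0 : R) (L : R -> R) : Prop :=
  (forall x, 0 < x < x0 -> 0 <= L x) /\
  (forall lam : R, 0 < lam -> (fun x => L (lam * x) / L x) @ 0^'+ --> (1:R)).

Definition regularly_varying_at0 (R : realType) (gamma : R -> R) (alpha : R) : Prop :=
  exists x0 : R, 0 < x0 /\ exists L : R -> R,
    slowly_varying_at0 x0 L /\ (forall x, 0 < x < x0 -> gamma x = x `^ alpha * L x).

Definition admissible_near0 (R : realType) (gamma : R -> R) : Prop :=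
  exists d : R, 0 < d /\
    (forall x, 0 < x < d -> {for x, continuous gamma}) /\
    (forall x y, 0 <= x -> x <= y -> y < d -> gamma x <= gamma y) /\
    gamma x @[x --> 0^'+] --> (0:R) /\
    gamma 0 = 0.

(* Main.v *)
Require Import Defs.
From HB Require Import structures.
From mathcomp Require Import all_boot all_order all_algebra.
From mathcomp Require Import all_classical all_reals all_analysis measurable_realfun.
From mathcomp Require Import ring lra.
Import Order.TTheory GRing.Theory Num.Theory.
Import numFieldNormedType.Exports.
Local Open Scope classical_set_scope.
Local Open Scope ring_scope.

Lemma key_const (R : realType) (gamma : R -> R) (alpha d : R) :
  0 < d ->
  0 < alpha <= 1 ->
  regularly_varying_at0 gamma alpha ->
  exists e q : R, [/\ 0 < e <= 1, 0 < q < 1,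
    (forall z, 0 < z < e -> gamma (z * 2^-1) <= q * gamma z),
    (forall z, 0 < z < e -> 0 <= gamma z) & e <= d].
Proof.
move=> d0 /andP[a0 a1] [x1 [x10 [L [[L0 Lr] gL]]]].
set h : R := 2^-1.
have h0 : 0 < h by rewrite /h invr_gt0.
have h1 : h < 1 by rewrite /h invf_lt1 // ltr1n.
set p := h `^ alpha.
have p0 : 0 < p := powR_gt0 _ h0.
have p1 : p < 1.
  have := @gt0_ltr_powR R alpha a0 h 1.
  rewrite !nnegrE ltW // ler01 powR1 => /(_ isT isT h1); done.
set r := (1 + p) / (2 * p).
set q := (1 + p) / 2.
have r1 : 1 < r by rewrite /r ltr_pdivlMr ?mulr_gt0 // mul1r; lra.
have qpr : q = p * r by rewrite /q /r; field; rewrite gt_eqF.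
have N1 := cvgr_lt _ (Lr h h0) _ r1.
have N2 := cvgr_gt _ (Lr h h0) _ ltr01.
have : \forall t \near 0^'+, (L (h * t) / L t < r) && (0 < L (h * t) / L t).
  by near=> t; apply/andP; split; near: t; [exact: N1|exact: N2].
move=> /nbhs_ballP[e' /= e'0 He].
set e := Num.min e' (Num.min x1 (Num.min d 1)).
have e0 : 0 < e by rewrite /e !lt_min e'0 x10 d0 ltr01.
have ele : forall z, z < e -> [/\ z < e', z < x1 & z < d].
  by move=> z; rewrite /e !lt_min => /andP[-> /andP[-> /andP[-> _]]].
exists e, q; split.
- by rewrite e0 /= /e !ge_min lexx !orbT.
- by apply/andP; split; rewrite /q; lra.
- move=> z /andP[z0 /ele[ze' zx1 zd]].
  have zh0 : 0 < z * h by rewrite mulr_gt0.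
  have zhz : z * h < z by rewrite gtr_pMr.
  rewrite (gL (z * h)); last by rewrite zh0 (lt_trans zhz).
  rewrite (gL z); last by rewrite z0.
  rewrite powRM; [|exact: ltW|exact: ltW]; rewrite -/p (mulrC z h).
  have /andP[Hr Hp] : (L (h * z) / L z < r) && (0 < L (h * z) / L z).
    apply: (He z) => //; rewrite /ball /= sub0r normrN ger0_norm ?ltW //.
  have Lz0 : L z != 0 by apply: contraTneq Hp => ->; rewrite invr0 mulr0 ltxx.
  have Lzp : 0 < L z by rewrite lt_neqAle eq_sym Lz0 L0 // z0.
  rewrite ltr_pdivrMr // in Hr.
  have A0 : 0 <= z `^ alpha * p by rewrite mulr_ge0 // ?powR_ge0 // ltW.
  rewrite qpr (_ : p * r * (z `^ alpha * L z) = z `^ alpha * p * (r * L z)); last by ring.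
  by apply: ler_wpM2l => //; exact: ltW.
- move=> z /andP[z0 /ele[_ zx1 _]]; rewrite gL ?z0 ?zx1 //.
  by rewrite mulr_ge0 // ?powR_ge0 // L0 // z0.
- by rewrite /e !ge_min lexx !orbT.
Unshelve. all: try by end_near.
Qed.
Lemma iter_bound (R : realType) (gamma : R -> R) (e q h : R) :
  0 <= q -> 0 < h <= 1 ->
  (forall z, 0 < z < e -> gamma (z * h) <= q * gamma z) ->
  forall k z, 0 < z < e -> gamma (z * h ^+ k) <= q ^+ k * gamma z.
Proof.
move=> q0 /andP[h0 h1] H; elim=> [|k IH] z /andP[z0 ze].
  by rewrite !expr0 mulr1 mul1r.
have hk0 : 0 < h ^+ k by apply: exprn_gt0.
have hk1 : h ^+ k <= 1 by apply: exprn_ile1; [exact: ltW|].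
have : 0 < z * h ^+ k < e.
  apply/andP; split; first exact: mulr_gt0.
  by apply: (le_lt_trans _ ze); rewrite ler_piMr // ltW.
move=> /H; rewrite exprSr mulrA => H1.
apply: (le_trans H1); rewrite exprSr (mulrC (q ^+ k)) -mulrA.
apply: ler_wpM2l => //.
apply: IH; exact/andP.
Qed.

Lemma geo_bound (R : realType) (a q : R) : 0 <= a -> 0 < q < 1 ->
  (\sum_(k <oo) ((a * q ^+ k)%:E) <= (a * (1 - q)^-1)%:E)%E.
Proof.
move=> a0 /andP[q0 q1].
have nq : `|q| < 1 by rewrite ger0_norm // ltW.
apply: lime_le; first by apply: is_cvg_nneseries => n _ _; rewrite lee_fin mulr_ge0 // exprn_ge0 // ltW.
near=> n; rewrite sumEFin lee_fin.
have H := @geometric_le_lim R n a q a0 q0 nq.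
move: H; rewrite /series /=. done.
Unshelve. all: by end_near.
Qed.

Theorem proposition2p8 (R : realType) (gamma : R -> R) (alpha : R) :
  admissible_near0 gamma ->
  0 < alpha <= 1 ->
  regularly_varying_at0 gamma alpha ->
  exists c : R, 0 < c /\ exists x0 : R, 0 < x0 < 1 /\
    forall x : R, 0 <= x <= x0 ->
      (\int[lebesgue_measure]_(y in `]0%R, 2^-1%R[)
          ((gamma (x * y) / (y * Num.sqrt (ln (y^-1))))%:E) <= (c * gamma x)%:E)%E.
Proof.
move=> adm aH rv.
case: adm => d [d0 [dcont [dmono [_ g0]]]].
have [e [q [/andP[e0 e1] /andP[q0 q1] Hstep Hnn ed]]] := key_const _ _ _ _ d0 aH rv.
set h : R := 2^-1.
have h0 : 0 < h by rewrite /h invr_gt0.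
have h1 : h < 1 by rewrite /h invf_lt1 // ltr1n.
have h01 : 0 < h <= 1 by rewrite h0 ltW.
have Hit := iter_bound _ _ _ _ _ (ltW q0) h01 Hstep.
have hmono : forall m n, (m <= n)%N -> h ^+ n <= h ^+ m.
  by move=> m n mn; apply: ler_wiXn2l => //; exact: ltW.
have hpos : forall n, 0 < h ^+ n by move=> n; exact: exprn_gt0.
set s := Num.sqrt (ln (h^-1)).
have lnh : 0 < ln (h^-1) by rewrite ln_gt0 // /h invrK ltr1n.
have s0 : 0 < s by rewrite /s sqrtr_gt0.
exists (s^-1 * (1 - q)^-1); split.
  by rewrite mulr_gt0 // invr_gt0 // subr_gt0.
exists (e / 2); split; first by apply/andP; split; lra.
move=> x /andP[x0 xe].
have [->|xnz] := eqVneq x 0.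
  under eq_integral => y _ do rewrite mul0r g0 mul0r.
  by rewrite integral0 g0 mulr0.
have xpos : 0 < x by rewrite lt_neqAle eq_sym xnz.
have xe' : x < e by lra.
set g := gamma x.
pose F := fun k : nat => [set` Interval (BLeft (h ^+ k.+2)) (BLeft (h ^+ k.+1))].
have Ueq : `]0, h[%classic = \bigcup_k F k.
  apply/seteqP; split => y /=.
    rewrite in_itv /= => /andP[y0 yh].
    have : \forall n \near \oo, h ^+ n < y.
      by apply: (cvgr_lt _ (cvg_expr _) _ y0); rewrite ger0_norm // ltW.
    case=> N _ HN.
    have exP : exists n, h ^+ n.+2 <= y.
      by exists N; apply/ltW/HN; rewrite /= leqW // leqW.
    case: (ex_minnP exP) => m Pm Hmin.
    exists m => //; rewrite /F /= in_itv /= Pm /=.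
    case: m Pm Hmin => [|m] Pm Hmin; first by rewrite expr1.
    rewrite ltNge; apply/negP => Hle.
    by have := Hmin m Hle; rewrite ltnn.
  move=> [k _]; rewrite /F /= !in_itv /= => /andP[lo hi].
  apply/andP; split; first exact: lt_le_trans (hpos _) lo.
  apply: (lt_le_trans hi); rewrite exprS ler_piMr ?(ltW h0) //.
  exact: exprn_ile1 (ltW h0) (ltW h1).
have mf : measurable_fun `]0, h[%classic (fun y => (gamma (x * y) / (y * Num.sqrt (ln y^-1)))%:E).
  apply/measurable_EFinP.
  apply: open_continuous_measurable_fun; first exact: interval_open.
  move=> y; rewrite inE /= in_itv /= => /andP[y0 yh].
  have xy : x * y < x by rewrite gtr_pMr // (lt_trans yh).
  have xy0 : 0 < x * y by rewrite mulr_gt0.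
  have lny : 0 < ln y^-1 by rewrite ln_gt0 // invf_gt1 // (lt_trans yh).
  suff : {for y, continuous (fun y => gamma (x * y) / (y * Num.sqrt (ln y^-1)))} by [].
  apply: cvgM.
    apply: (@continuous_comp _ _ _ (fun y => x * y) gamma y).
      exact: mulrl_continuous.
    by apply: dcont; rewrite xy0 /= (lt_trans xy) // (lt_le_trans xe').
  apply: cvgV; first by rewrite mulf_neq0 ?gt_eqF // sqrtr_gt0.
  apply: cvgM; first exact: cvg_id.
  apply: (@cvg_comp _ _ _ (fun z => ln z^-1) Num.sqrt _ (nbhs (ln y^-1))); last exact: sqrt_continuous.
  apply: cvg_comp.
    by apply: inv_continuous; rewrite gt_eqF.
  by apply: continuous_ln; rewrite invr_gt0.
have f0 : forall y, `]0, h[%classic y -> (0 <= (gamma (x * y) / (y * Num.sqrt (ln y^-1)))%:E)%E.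
  move=> y /= /andP[y0 yh]; rewrite lee_fin.
  have xy : x * y < x by rewrite gtr_pMr // (lt_trans yh).
  rewrite divr_ge0 // ?mulr_ge0 // ?sqrtr_ge0 ?(ltW y0) //.
  by apply: Hnn; rewrite mulr_gt0 //= (lt_trans xy).
have tF : trivIset setT F.
  move=> i j _ _ [y [/= Hi Hj]]; move: Hi Hj; rewrite /F /= !in_itv /=.
  move=> /andP[Hi1 Hi2] /andP[Hj1 Hj2].
  apply/eqP; rewrite eqn_leq; apply/andP; split; rewrite leqNgt; apply/negP => lt.
  - have H := hmono j.+2 i.+1 lt.
    by have := lt_le_trans Hi2 (le_trans H Hj1); rewrite ltxx.
  - have H := hmono i.+2 j.+1 lt.
    by have := lt_le_trans Hj2 (le_trans H Hi1); rewrite ltxx.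
have mF : forall k, measurable (F k) by move=> k; exact: measurable_itv.
rewrite Ueq ge0_integral_bigcup //; last 2 first.
- by rewrite -Ueq.
- by rewrite -Ueq.
apply: (@le_trans _ _ (\sum_(k <oo) ((g / s) * q ^+ k)%:E)%E).
  apply: lee_nneseries => [k _ _|k _].
    by apply: integral_ge0 => y Fy; apply: f0; rewrite Ueq; exists k.
  have Fsub : F k `<=` `]0, h[%classic by rewrite Ueq => y Fy; exists k.
  set B := q ^+ k * g / (h ^+ k.+2 * s).
  apply: (@le_trans _ _ (\int[lebesgue_measure]_(y in F k) (cst B%:E) y)%E).
    apply: ge0_le_integral.
    + exact: measurable_itv.
    + by move=> y /Fsub; exact: f0.
    + exact: measurable_funS (measurable_itv _) Fsub mf.
    + exact: measurable_cst.
    move=> y; rewrite /F /= in_itv /= => /andP[lo hi]; rewrite lee_fin.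
    have y0 : 0 < y := lt_le_trans (hpos _) lo.
    have hk1 : h ^+ k.+1 <= h ^+ k := hmono k k.+1 (leqnSn k).
    have hkh : h ^+ k.+1 <= h.
      by rewrite exprS ler_piMr ?(ltW h0) //; exact: exprn_ile1 (ltW h0) (ltW h1).
    have yh : y < h := lt_le_trans hi hkh.
    have y1 : y < 1 := lt_trans yh h1.
    have hkx : x * h ^+ k <= x.
      by rewrite ler_piMr ?(ltW xpos) //; exact: exprn_ile1 (ltW h0) (ltW h1).
    have G1 : gamma (x * y) <= gamma (x * h ^+ k).
      apply: dmono; first by rewrite mulr_ge0 // ltW.
        by rewrite ler_wpM2l ?(ltW xpos) //; exact: ltW (lt_le_trans hi hk1).
      exact: le_lt_trans hkx (lt_le_trans xe' ed).
    have G2 : gamma (x * h ^+ k) <= q ^+ k * g by apply: Hit; rewrite xpos xe'.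
    have lny : 0 < ln y^-1 by rewrite ln_gt0 // invf_gt1.
    have den0 : 0 < y * Num.sqrt (ln y^-1) by rewrite mulr_gt0 // sqrtr_gt0.
    have den1 : 0 < h ^+ k.+2 * s := mulr_gt0 (hpos _) s0.
    have D1 : (y * Num.sqrt (ln y^-1))^-1 <= (h ^+ k.+2 * s)^-1.
      rewrite lef_pV2 ?posrE //.
      apply: ler_pM; [exact: ltW (hpos _) | exact: ltW s0 | exact: lo | ].
      rewrite /s ler_sqrt; last exact: ltW.
      rewrite ler_ln ?posrE ?invr_gt0 //.
      rewrite lef_pV2 ?posrE //; exact: ltW.
    have xy : x * y < x by rewrite gtr_pMr.
    have gxy0 : 0 <= gamma (x * y) by apply: Hnn; rewrite mulr_gt0 //= (lt_trans xy).
    rewrite /B; apply: ler_pM.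
    - exact: gxy0.
    - by rewrite invr_ge0 ltW.
    - exact: le_trans G1 G2.
    - exact: D1.
  rewrite integral_cst; last exact: measurable_itv.
  have hlt : h ^+ k.+2 < h ^+ k.+1 by rewrite [X in X < _]exprS gtr_pMl ?hpos.
  have mk : lebesgue_measure `[h ^+ k.+2, h ^+ k.+1[%classic = ((h ^+ k.+1)%:E - (h ^+ k.+2)%:E)%E.
    by rewrite lebesgue_measure_itv /= lte_fin hlt.
  apply: (@le_trans _ _ (B%:E * ((h ^+ k.+1)%:E - (h ^+ k.+2)%:E))%E).
    rewrite le_eqVlt; apply/orP; left; apply/eqP; congr (_ * _)%E; exact: mk.
  rewrite -EFinB -EFinM lee_fin.
  rewrite le_eqVlt; apply/orP; left; apply/eqP.
  rewrite /B [h ^+ k.+2]exprS.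
  have t0 := hpos k.+1; move: t0; set t := h ^+ k.+1 => t0.
  rewrite /h; field.
  by rewrite gt_eqF // gt_eqF.
apply: le_trans (geo_bound _ _ _ _ _) _.
- by rewrite divr_ge0 // ?(ltW s0) // Hnn // xpos.
- by rewrite q0 q1.
by rewrite lee_fin [leRHS]mulrC !mulrA.
Qed.
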